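(* Let $0\le\epsilon<1/8$, let $v\in\mathbb R^n$ with $\|v\|=1$, and let $Q^*\subseteq[n]$ with $1\le|Q^*|\le n/2$. If $\left\|\bar{\mathbf 1}_{Q^*}/\|\bar{\mathbf 1}_{Q^*}\| - v\right\|^2\le\epsilon$, then, with $Q=\{i\in[n]: v_i\ge \frac{1}{2\sqrt{2|Q^*|}}\}$, $$|Q\,\triangle\,Q^*| = \|\mathbf 1_Q-\mathbf 1_{Q^*}\|^2 \le \frac{8\epsilon|Q|}{1-8\epsilon}.$$
   Context: $\mathbf 1_Q\in\{0,1\}^n$ is the indicator vector of $Q$, $\bar x=x-\frac{\langle x,\mathbf1\rangle}{n}\mathbf1$ for $x\in\mathbb R^n$, $\|\cdot\|$ is the Euclidean norm, and $\triangle$ is symmetric difference. *)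

(* Defs.v *)
From mathcomp Require Import all_boot all_order all_algebra.
Set Implicit Arguments. Unset Strict Implicit. Unset Printing Implicit Defensive.
Import Order.TTheory GRing.Theory Num.Theory.
Local Open Scope ring_scope.

Definition indv {R : numDomainType} {n : nat} (Q : {set 'I_n}) : 'I_n -> R :=
  fun i => (i \in Q)%:R.

Definition centerv {R : numFieldType} {n : nat} (x : 'I_n -> R) : 'I_n -> R :=
  fun i => x i - (\sum_(j < n) x j) / n%:R.

Definition sqnorm {R : numDomainType} {n : nat} (x : 'I_n -> R) : R :=
  \sum_(i < n) x i ^+ 2.

Definition enorm {R : rcfType} {n : nat} (x : 'I_n -> R) : R :=
  Num.sqrt (sqnorm x).

Definition symdiff {T : finType} (A B : {set T}) : {set T} :=
  (A :\: B) :|: (B :\: A).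

(* Main.v *)
Require Import Defs.
From mathcomp Require Import all_boot all_order all_algebra.
From mathcomp Require Import ring lra.
Import Order.TTheory GRing.Theory Num.Theory.
Local Open Scope ring_scope.

Lemma sum_indv (R : numDomainType) n (A : {set 'I_n}) :
  \sum_i (indv A i : R) = (#|A|)%:R.
Proof.
rewrite (eq_bigr (fun i => if i \in A then 1 else 0)); last first.
  by move=> i _; rewrite /indv; case: (i \in A).
by rewrite -big_mkcond sumr_const.
Qed.

Lemma card_sub_le (n : nat) (Q Qs : {set 'I_n}) :
  (#|Qs| <= #|Q| + #|symdiff Q Qs|)%N.
Proof.
apply: leq_trans (leq_card_setU Q (symdiff Q Qs)).
apply: subset_leq_card; apply/subsetP => i Hi.
rewrite /symdiff !inE Hi /=; by case: (i \in Q).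
Qed.

Theorem lemma6p3 (R : rcfType) (n : nat) (eps : R) (v : 'I_n -> R)
    (Qs : {set 'I_n}) :
  0 <= eps -> eps < 1 / 8 ->
  enorm v = 1 ->
  (1 <= #|Qs|)%N -> (2 * #|Qs| <= n)%N ->
  sqnorm (fun i => centerv (indv Qs) i / enorm (centerv (indv Qs)) - v i)
    <= eps ->
  let Q := [set i : 'I_n | 1 / (2 * Num.sqrt (2 * (#|Qs|)%:R)) <= v i] in
  (#|symdiff Q Qs|)%:R = sqnorm (R:=R) (fun i => indv Q i - indv Qs i) /\
  (#|symdiff Q Qs|)%:R <= 8 * eps * (#|Q|)%:R / (1 - 8 * eps).
Proof.
move=> he0 he8 _ hk hkn hS Q.
have Hsd : forall i, (indv Q i - indv Qs i : R) ^+ 2 = indv (symdiff Q Qs) i.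
  move=> i; rewrite /indv /symdiff in_setU !in_setD.
  by case: (i \in Q); case: (i \in Qs) => /=; ring.
split.
  by rewrite /sqnorm (eq_bigr _ (fun i _ => Hsd i)) sum_indv.
set K : R := (#|Qs|)%:R.
set N : R := n%:R.
set d : R := (#|symdiff Q Qs|)%:R.
set q : R := (#|Q|)%:R.
have hK1 : 1 <= K by rewrite /K ler1n.
have hNK : 2 * K <= N by rewrite /K /N -natrM ler_nat.
have hKq : K <= q + d by rewrite /K /q /d -natrD ler_nat card_sub_le.
have hN0 : 0 < N by lra.
set a : R := 1 - K / N.
have ha : 1 <= 2 * a.
  rewrite /a; have : K / N <= 1 / 2.
    by rewrite ler_pdivrMr //; lra.
  lra.
set c := @centerv R n (@indv R n Qs).
have hc : forall i, c i = indv Qs i - K / N.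
  by move=> i; rewrite /c /centerv sum_indv.
have hS2 : sqnorm c = K * a.
  rewrite /sqnorm (eq_bigr (fun i => indv Qs i * (1 - 2 * (K / N)) + (K/N)^+2)); last first.
    move=> i _; rewrite hc /indv; case: (i \in Qs) => /=; ring.
  rewrite big_split /= -mulr_suml sum_indv sumr_const card_ord /a.
  rewrite -mulr_natr /N -/N; field; lra.
set s := enorm c.
have hs0 : 0 < s by rewrite /s /enorm hS2 sqrtr_gt0; nra.
have hs2 : s ^+ 2 = K * a by rewrite /s /enorm sqr_sqrtr hS2 //; nra.
set r := Num.sqrt (2 * K).
have hr0 : 0 < r by rewrite /r sqrtr_gt0; lra.
have hr2 : r ^+ 2 = 2 * K by rewrite /r sqr_sqrtr //; lra.
set t := 1 / (2 * r).
have ht0 : 0 < t by rewrite /t divr_gt0 //; lra.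
have ht2 : t ^+ 2 = 1 / (8 * K).
  rewrite /t expr_div_n exprMn hr2; field; lra.
have hsar : s <= a * r.
  have har : 0 <= a * r by nra.
  rewrite -ler_sqr ?nnegrE; [|exact: ltW|exact: har].
  by rewrite hs2 exprMn hr2; nra.
have hw1 : forall i, i \in Qs -> 2 * t <= c i / s.
  move=> i Hi; rewrite hc /indv Hi /= -/a /t.
  have e1 : 2 * (1 / (2 * r)) = 1 / r by field; lra.
  have e2 : a / s - 1 / r = (a * r - s) / (s * r) by field; lra.
  rewrite e1 -subr_ge0 e2; apply: divr_ge0; nra.
have hw2 : forall i, i \notin Qs -> c i / s <= 0.
  move=> i Hi; rewrite hc /indv (negbTE Hi) /= sub0r mulNr oppr_le0.
  apply: divr_ge0 => //; [apply: divr_ge0; lra | lra].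
have hd : d * t ^+ 2 <= eps.
  apply: le_trans hS; rewrite /sqnorm (bigID (fun i => i \in symdiff Q Qs)) /=.
  rewrite -[d * _]addr0; apply: lerD; last by apply: sumr_ge0 => i _; exact: sqr_ge0.
  have -> : d * t ^+ 2 = \sum_(i in symdiff Q Qs) t ^+ 2 by rewrite sumr_const mulr_natl.
  apply: ler_sum => i; rewrite /symdiff in_setU !in_setD /Q !inE -/r -/t.
  have -> : centerv (indv Qs) i / enorm (centerv (indv Qs)) = c i / s by [].
  case/orP => /andP [H1 H2].
    have := hw2 i H1; nra.
  have := hw1 i H2; rewrite -ltNge in H1; nra.
rewrite ht2 in hd.
have hd2 : d <= 8 * eps * K.
  move: hd; rewrite mulrA mulr1 ler_pdivrMr; last lra. nra.
have -> : 8 * eps * q / (1 - 8 * eps) = d + (8 * eps * q - d * (1 - 8 * eps)) / (1 - 8 * eps) by field; lra.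
rewrite lerDl; apply: divr_ge0; nra.

Qed.
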